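(* For all integers $0\le k\le n$, the number of directed paths in $\Gamma$ from the node $(k,0)$ to the node $(n,n)$ is $$\pi(n,n,k)=\binom{n}{k}E_{n-k}.$$
   Context: Let $\Gamma$ be the directed graph whose nodes are the pairs $(n,k)$ of integers with $n\ge k\ge 0$, and whose edges are, for all $n\ge k\ge 0$: $(n+1,k)\to(n+1,k+1)$ and $(n,n-k)\to(n+1,k+1)$. $\pi(n,k,i)$ denotes the number of directed paths in $\Gamma$ from $(i,0)$ to $(n,k)$, where the trivial path counts when $(i,0)=(n,k)$. A permutation $\sigma_1\cdots\sigma_n$ of $\{1,\ldots,n\}$ is down-up if $\sigma_1>\sigma_2<\sigma_3>\cdots$; $E_n$ is the number of such permutations, with $E_0=E_1=1$. *)

(* Defs.v *)
From mathcomp Require Import all_boot all_order all_fingroup.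
Set Implicit Arguments. Unset Strict Implicit. Unset Printing Implicit Defensive.

Definition gnode (x : nat * nat) : bool := x.2 <= x.1.

(* Edges of Gamma, for all n >= k >= 0:
   (n+1,k) -> (n+1,k+1)          : x = (a,b), y = (a,b+1), with a = n+1, b = k, i.e. b < a
   (n,n-k) -> (n+1,k+1)          : x = (a, a-j), y = (a+1, j+1), j <= a;
                                   equivalently x.2 <= x.1 and y.2 = (x.1 - x.2) + 1. *)
Definition gedge (x y : nat * nat) : bool :=
  [&& y.1 == x.1, y.2 == x.2.+1 & x.2 < x.1]
  || [&& y.1 == x.1.+1, x.2 <= x.1 & y.2 == (x.1 - x.2).+1].

(* A directed path in Gamma from u to v, given as its full list of vertices
   (the trivial path is [:: u] when u = v). *)
Definition gpath (u v : nat * nat) (p : seq (nat * nat)) : bool :=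
  match p with
  | [::] => false
  | x :: q => [&& x == u, path gedge x q, last x q == v & all gnode p]
  end.

(* Down-up permutations of {0,...,n-1} (order-isomorphic to {1,...,n}):
   s_0 > s_1 < s_2 > ... *)
Definition downup n (s : 'S_n) : bool :=
  [forall i : 'I_n, forall j : 'I_n,
     (nat_of_ord j == (nat_of_ord i).+1) ==>
       (if odd i then s i < s j else s j < s i)].

Definition Euler_E (n : nat) : nat := #|[set s : 'S_n | downup s]|.

(* Main.v *)
Require Import Defs.
From mathcomp Require Import all_boot all_order all_fingroup.
From mathcomp Require Import zify.
Set Implicit Arguments. Unset Strict Implicit. Unset Printing Implicit Defensive.

Fixpoint paths (k n : nat) : nat -> seq (seq (nat * nat)) :=
  let prev := match n with 0 => fun _ => [::] | n'.+1 => fun m' => paths k n' (n' - m') end in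
  fix pm (m : nat) := match m with
   | 0 => if n == k then [:: [:: (k, 0)]] else [::]
   | m'.+1 => map (rcons^~ (n, m'.+1)) (pm m' ++ prev m')
  end.

Lemma gpath_cases u v p : gpath u v p ->
  (p = [:: u] /\ u = v) \/ (exists q w, p = rcons q v /\ gpath u w q /\ gedge w v /\ gnode v).
Proof.
case: p => [|x q] //= /and4P [/eqP-> hp /eqP hl ha].
case/lastP: q hp hl ha => [|q y] hp hl ha; first by left; move: hl => /= ->.
move: hp; rewrite rcons_path => /andP [hp he].
move: ha; rewrite /= all_rcons => /and3P [hx hy hq].
rewrite last_rcons in hl; subst y.
right; exists (u :: q), (last u q); split => //; split; last by split.
by rewrite /= eqxx hp eqxx /= hx hq.
Qed.

Lemma gpath_rcons u w v q : gpath u w q -> gedge w v -> gnode v -> gpath u v (rcons q v).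
Proof.
case: q => [|x q] //= /and4P [/eqP-> hp /eqP hl ha] he hv.
by rewrite eqxx rcons_path hp hl he last_rcons eqxx /= all_rcons /= hv.
Qed.

Lemma gpath_last u v p : gpath u v p -> last (0,0) p = v.
Proof. by case: p => [|x q] //= /and4P [_ _ /eqP -> _]. Qed.

Lemma gedge_S n m w : m < n -> gedge w (n, m.+1) = (w == (n, m)) || (w == (n.-1, n.-1 - m)).
Proof.
case: w => a b; case: n => // n' hm; rewrite /gedge /= !xpair_eqE !eqSS.
apply/idP/idP.
- case/orP => [/and3P [/eqP <- /eqP -> _] | /and3P [/eqP -> hb /eqP ->]].
  + by rewrite !eqxx.
  + by rewrite subKn // !eqxx orbT.
- case/orP => [/andP [/eqP -> /eqP ->] | /andP [/eqP -> /eqP ->]].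
  + by rewrite !eqxx hm.
  + by rewrite !eqxx leq_subr subKn ?eqxx ?orbT.
Qed.

Lemma gedge_0 w n : gedge w (n, 0) = false.
Proof. by case: w => a b; rewrite /gedge /= !(andbF, andFb). Qed.

Lemma mem_paths k n m : m <= n -> forall p, (p \in paths k n m) = gpath (k, 0) (n, m) p.
Proof.
elim: n m => [|n IHn] m; elim: m => [|m IHm] hm p.
- rewrite /=; apply/idP/idP.
  + case: ifP => // /eqP hk; rewrite inE => /eqP ->; rewrite /= !eqxx /= ?hk ?eqxx /= ?andbT //.
  + case/gpath_cases => [[-> [<-]] | [q [w [_ [_ [he _]]]]]]; last by rewrite gedge_0 in he.
    by rewrite eqxx inE.
- by [].
- rewrite /=; apply/idP/idP.
  + case: ifP => // /eqP hk; rewrite inE => /eqP ->; rewrite /= !eqxx /= ?hk ?eqxx /= ?andbT //.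
  + case/gpath_cases => [[-> [<-]] | [q [w [_ [_ [he _]]]]]]; last by rewrite gedge_0 in he.
    by rewrite eqxx inE.
- have hm' : m < n.+1 by [].
  change ((p \in map (rcons^~ (n.+1, m.+1)) (paths k n.+1 m ++ paths k n (n - m)))
    = gpath (k, 0) (n.+1, m.+1) p).
  apply/idP/idP.
  + case/mapP => q; rewrite mem_cat => /orP [hq | hq] ->.
    * rewrite IHm in hq; last exact: ltnW.
      by apply: gpath_rcons hq _ _; rewrite ?gedge_S ?eqxx.
    * rewrite IHn in hq; last exact: leq_subr.
      by apply: gpath_rcons hq _ _; rewrite ?gedge_S ?eqxx ?orbT.
  + case/gpath_cases => [[_ [] //] | [q [w [-> [hq [he _]]]]]].
    apply: map_f; rewrite mem_cat; rewrite gedge_S // in he.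
    case/orP: he => /eqP hw; subst w.
    * by rewrite IHm ?hq // ltnW.
    * by rewrite (IHn (n - m)) ?leq_subr ?hq ?orbT.
Qed.

Lemma uniq_paths k n m : m <= n -> uniq (paths k n m).
Proof.
elim: n m => [|n IHn] m; elim: m => [|m IHm] hm.
- by rewrite /=; case: ifP.
- by [].
- by rewrite /=; case: ifP.
- change (uniq (map (rcons^~ (n.+1, m.+1)) (paths k n.+1 m ++ paths k n (n - m)))).
  rewrite map_inj_uniq; last by move=> x y /rcons_inj [].
  rewrite cat_uniq IHm ?IHn ?leq_subr ?(ltnW hm) // andbT.
  apply/hasPn => q; rewrite mem_paths ?leq_subr // => /gpath_last hq.
  apply/negP; rewrite mem_paths ?(ltnW hm) // => /gpath_last; rewrite hq.
  by move=> [] h; lia.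
Qed.

Lemma size_paths k n m : size (paths k n m.+1) =
  size (paths k n m) + (if n is n'.+1 then size (paths k n' (n' - m)) else 0).
Proof.
case: n => [|n].
- change (size (map (rcons^~ (0, m.+1)) (paths k 0 m ++ [::])) = size (paths k 0 m) + 0).
  by rewrite size_map cats0 addn0.
- change (size (map (rcons^~ (n.+1, m.+1)) (paths k n.+1 m ++ paths k n (n - m))) =
     size (paths k n.+1 m) + size (paths k n (n - m))).
  by rewrite size_map size_cat.
Qed.

Lemma size_paths0 k n : size (paths k n 0) = (n == k).
Proof. by case: n => [|n] /=; case: ifP. Qed.
Fixpoint ent (N r : nat) : nat :=
  match N with 0 => (r == 0 : nat) | N'.+1 => \sum_(i < r) ent N' (N' - i) end.

Lemma ent_S0 N : ent N.+1 0 = 0.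
Proof. by rewrite /= big_ord0. Qed.

Lemma ent_SS N r : ent N.+1 r.+1 = ent N.+1 r + ent N (N - r).
Proof. by rewrite /= big_ord_recr. Qed.

Lemma ent0 r : ent 0 r = (r == 0).
Proof. by []. Qed.

Lemma ent_S N r : ent N.+1 r = \sum_(i < r) ent N (N - i).
Proof. by []. Qed.

Arguments ent : simpl never.

Definition F k n m := \sum_(s < k.+1) 'C(m, s) * 'C(n - m, k - s) * ent (n - k) (m - s).

Lemma pascal_l j k (X : nat -> nat) :
  \sum_(s < k.+1) 'C(j.+1, s) * X s =
  \sum_(s < k.+1) 'C(j, s) * X s + \sum_(s < k) 'C(j, s) * X s.+1.
Proof.
rewrite !big_ord_recl /= !bin0 -addnA; congr (_ + _).
rewrite -big_split /=; apply: eq_bigr => i _.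
by rewrite binS mulnDl.
Qed.

Lemma pascal_r a k (Y : nat -> nat) :
  \sum_(s < k.+1) 'C(a.+1, k - s) * Y s =
  \sum_(s < k.+1) 'C(a, k - s) * Y s + \sum_(s < k) 'C(a, k - s.+1) * Y s.
Proof.
rewrite !big_ord_recr /= subnn !bin0 addnAC; congr (_ + _).
rewrite -big_split /=; apply: eq_bigr => i _.
by rewrite -(subnSK (ltn_ord i)) binS mulnDl.
Qed.

Lemma F_rec k n j : k <= n -> j <= n -> F k n.+1 j.+1 = F k n.+1 j + F k n (n - j).
Proof.
move=> hk hj.
rewrite /F subSS (subSn hk) (subSn hj).
set N := n - k.
have E1 : \sum_(s < k.+1) 'C(j.+1, s) * 'C(n - j, k - s) * ent N.+1 (j.+1 - s) =
  \sum_(s < k.+1) 'C(j, s) * ('C(n - j, k - s) * ent N.+1 (j.+1 - s)) +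
  \sum_(s < k) 'C(j, s) * ('C(n - j, k - s.+1) * ent N.+1 (j - s)).
  rewrite -(pascal_l j k (fun i => 'C(n - j, k - i) * ent N.+1 (j.+1 - i))).
  by apply: eq_bigr => i _; rewrite mulnA.
have E2 : \sum_(s < k.+1) 'C(j, s) * 'C((n - j).+1, k - s) * ent N.+1 (j - s) =
  \sum_(s < k.+1) 'C(n - j, k - s) * ('C(j, s) * ent N.+1 (j - s)) +
  \sum_(s < k) 'C(n - j, k - s.+1) * ('C(j, s) * ent N.+1 (j - s)).
  rewrite -(pascal_r (n - j) k (fun i => 'C(j, i) * ent N.+1 (j - i))).
  by apply: eq_bigr => i _; rewrite mulnCA mulnA.
rewrite E1 E2.
have E3 : \sum_(s < k) 'C(n - j, k - s.+1) * ('C(j, s) * ent N.+1 (j - s)) =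
  \sum_(s < k) 'C(j, s) * ('C(n - j, k - s.+1) * ent N.+1 (j - s)).
  by apply: eq_bigr => i _; rewrite mulnCA.
rewrite E3 addnAC; congr (_ + _).
rewrite [X in _ = _ + X](reindex_inj rev_ord_inj) /= -big_split /=.
apply: eq_bigr => [[s hs]] _ /=.
rewrite subSS subKn; last by [].
rewrite (subKn (hs : s <= k)).
have [hsj|hsj] := leqP s j; last by rewrite (bin_small hsj) !mul0n muln0.
have [hks|hks] := leqP (k - s) (n - j); last by rewrite (bin_small hks) !muln0 mul0n.
rewrite (subSn hsj) ent_SS !mulnDr; congr (_ + _); first by rewrite mulnCA.
rewrite mulnA [_ * 'C(j, s)]mulnC; congr (_ * ent _ _); rewrite /N; lia.
Qed.

Lemma F_lt k n m : n < k -> m <= n -> F k n m = 0.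
Proof.
move=> hn hm; rewrite /F big1 // => [[s hs]] _ /=.
have [hsm|hsm] := leqP s m; last by rewrite (bin_small hsm).
by rewrite (@bin_small (n - m) (k - s)) ?muln0 ?mul0n //; lia.
Qed.

Lemma F_eq k m : m <= k -> F k k m = 1.
Proof.
move=> hm; rewrite /F (bigD1 (Ordinal (hm : m < k.+1))) //= big1 ?addn0.
  by rewrite !subnn ent0 !binn.
move=> [s hs] /= hne.
have [hsm|hsm] := ltnP s m.
  by rewrite (@bin_small (k - m) (k - s)) ?muln0 ?mul0n //; lia.
have hsm' : m < s.
  rewrite ltn_neqAle hsm andbT; apply/eqP => hms.
  by move: hne; rewrite -(inj_eq val_inj) /= hms eqxx.
by rewrite (bin_small hsm').
Qed.

Lemma F_0 k n : k < n -> F k n 0 = 0.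
Proof.
move=> hn; rewrite /F big1 // => [[s hs]] _ /=.
case: s hs => [|s] hs; last by rewrite bin0n.
by rewrite -(subnSK hn) ent_S0 muln0.
Qed.

Lemma F_diag k n : k <= n -> F k n n = 'C(n, k) * ent (n - k) (n - k).
Proof.
move=> hk; rewrite /F (bigD1 ord_max) //= big1 ?addn0.
  by rewrite !subnn bin0 muln1.
move=> [s hs] /= hne; rewrite subnn bin0n.
have -> : (k - s == 0) = false.
  apply/negbTE; rewrite subn_eq0 -ltnNge ltn_neqAle -ltnS hs andbT.
  by apply/eqP => e; move: hne; rewrite -(inj_eq val_inj) /= e eqxx.
by rewrite muln0 mul0n.
Qed.

Lemma size_paths_F k n m : m <= n -> size (paths k n m) = F k n m.
Proof.
elim: n m => [|n IHn] m; elim: m => [|m IHm] hm.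
- rewrite size_paths0; case: k => [|k]; first by rewrite F_eq.
  by rewrite F_lt.
- by [].
- rewrite size_paths0; case: (ltngtP n.+1 k) => h.
  + by rewrite F_lt.
  + by rewrite F_0.
  + by rewrite -h F_eq.
- rewrite size_paths IHm ?(ltnW hm) // IHn ?leq_subr //.
  case: (ltngtP n k) => h.
  + have [e|lt] := eqVneq k n.+1.
    * by rewrite e !F_eq ?(F_lt (ltnSn n)) ?addn0 ?leq_subr // ltnW.
    * have h' : n.+1 < k by rewrite ltn_neqAle h eq_sym lt.
      by rewrite !F_lt ?leq_subr // ltnW.
  + by rewrite F_rec // ltnW.
  + by subst k; rewrite F_rec.
Qed.

Fixpoint alt (dir : bool) (w : seq nat) : bool :=
  match w with
  | x :: ((y :: _) as w') => (if dir then y < x else x < y) && alt (~~ dir) w'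
  | _ => true
  end.

Lemma altP dir w : alt dir w <-> (forall i, i.+1 < size w ->
  if dir (+) odd i then nth 0 w i.+1 < nth 0 w i else nth 0 w i < nth 0 w i.+1).
Proof.
elim: w dir => [|x w IH] dir; first by [].
case: w IH => [|y w] IH; first by [].
rewrite [alt _ _]/=; split.
- case/andP => hc /IH h [|i] hi; first by rewrite addbF.
  by have := h i hi; rewrite /= addbN addNb.
- move=> h; apply/andP; split; first by have := h 0 isT; rewrite addbF.
  apply/IH => i hi; have := h i.+1 hi; by rewrite /= addbN addNb.
Qed.

Lemma count_sum (T : eqType) (a : pred T) L : count a L = \sum_(w <- L) (a w : nat).
Proof. by elim: L => [|x L IH]; rewrite ?big_nil ?big_cons //= IH. Qed.

Lemma count_perm_head P (X : seq nat) : uniq X -> X != [::] ->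
  count P (permutations X) =
  \sum_(x <- X) count (fun w => P (x :: w)) (permutations (rem x X)).
Proof.
move=> uX nX.
have nil_notin : perm_eq [::] X = false.
  by apply/negP => /perm_size /esym /eqP; rewrite size_eq0 (negPf nX).
transitivity (\sum_(x <- X) count (fun w => (head 0 w == x) && P w) (permutations X)).
  under [RHS]eq_bigr do rewrite count_sum.
  rewrite (exchange_big) /= count_sum big_seq [RHS]big_seq.
  apply: eq_bigr => w; rewrite mem_permutations.
  case: w => [|h w]; first by rewrite nil_notin.
  move=> hw; have hX : h \in X by rewrite -(perm_mem hw) mem_head.
  rewrite /=; case: (P (h :: w)).
    rewrite -count_sum (eq_count (a2 := pred1 h)); last by move=> x /=; rewrite andbT eq_sym.
    by rewrite count_uniq_mem // hX.
  by rewrite big1 // => x _; rewrite andbF.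
rewrite big_seq [RHS]big_seq; apply: eq_bigr => x hx.
rewrite -count_map.
have -> : count (fun w => (head 0 w == x) && P w) (permutations X) =
   count P (filter (fun w => head 0 w == x) (permutations X)).
  by rewrite count_filter; apply: eq_count => w; rewrite /= andbC.
suff hp : perm_eq (filter (fun w => head 0 w == x) (permutations X))
    (map (cons x) (permutations (rem x X))) by move/seq.permP: hp.
apply: uniq_perm.
- by apply: filter_uniq; apply: permutations_uniq.
- by rewrite map_inj_uniq ?permutations_uniq // => a b [].
- move=> [|h w]; rewrite mem_filter mem_permutations.
    by rewrite nil_notin andbF; apply/esym/mapP => [[?]].
  rewrite /=; have [-> | ne] := eqVneq h x.
    rewrite mem_map; last by move=> a b [].
    rewrite mem_permutations /=.
    by move/permPr: (perm_to_rem hx) => ->; rewrite perm_cons.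
  by apply/esym/mapP => [[w' _ [e _]]]; move: ne; rewrite e eqxx.
Qed.

Lemma rank_lt (lt : rel nat) (irr : irreflexive lt) (tr : transitive lt) Y y z :
  uniq Y -> y \in Y -> lt y z -> count (lt^~ y) Y < count (lt^~ z) Y.
Proof.
move=> uY hy hyz.
have e : count (predU (lt^~ y) (pred1 y)) Y = count (lt^~ y) Y + 1.
  have := count_predUI (lt^~ y) (pred1 y) Y.
  rewrite (eq_count (a1 := predI _ _) (a2 := pred0)); last first.
    by move=> w /=; case: eqP => [->|]; rewrite ?irr ?andbF ?andbT.
  by rewrite count_pred0 addn0 count_uniq_mem // hy.
rewrite -addn1 -e; apply: sub_count => w /=.
by case/orP => [h | /eqP ->]; [apply: tr h hyz | ].
Qed.

Lemma rank_sum (lt : rel nat) (irr : irreflexive lt) (tr : transitive lt)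
  (tot : forall a b, a != b -> lt a b || lt b a) (Y : seq nat) (x : nat) (g : nat -> nat) :
  uniq Y -> \sum_(y <- Y | lt y x) g (count (lt^~ y) Y) = \sum_(i < count (lt^~ x) Y) g i.
Proof.
move=> uY.
rewrite -big_filter -(big_map (fun y => count (lt^~ y) Y) xpredT g).
rewrite -(big_mkord xpredT g) /index_iota subn0.
apply: perm_big.
set S := map _ _.
have uS : uniq S.
  rewrite map_inj_in_uniq ?filter_uniq // => a b.
  rewrite !mem_filter => /andP [_ ha] /andP [_ hb] e.
  apply/eqP; apply/negP => /negP ne.
  case/orP: (tot a b ne) => h.
    by move: (rank_lt irr tr uY ha h); rewrite e ltnn.
  by move: (rank_lt irr tr uY hb h); rewrite e ltnn.
have sub : {subset S <= iota 0 (count (lt^~ x) Y)}.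
  move=> i /mapP [y]; rewrite mem_filter => /andP [hyx hy] ->.
  by rewrite mem_iota add0n; apply: rank_lt.
have sz : size (iota 0 (count (lt^~ x) Y)) <= size S.
  by rewrite size_iota size_map size_filter.
have [_ eqS] := uniq_min_size uS sub sz.
by apply: uniq_perm => //; apply: iota_uniq.
Qed.

Lemma count3 z Y : count (fun y => y < z) Y + count (fun y => z < y) Y + count_mem z Y = size Y.
Proof.
elim: Y => [|y Y IH] //=; rewrite -[in RHS]IH.
by case: (ltngtP y z) => h /=; rewrite ?add0n ?add1n ?addSn ?addnS.
Qed.

Lemma cnt_step dir x Y : uniq Y -> Y != [::] ->
  count (fun w => alt dir (x :: w)) (permutations Y) =
  \sum_(y <- Y | if dir then y < x else x < y)
     count (fun w => alt (~~ dir) (y :: w)) (permutations (rem y Y)).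
Proof.
move=> uY nY; rewrite count_perm_head // [RHS]big_mkcond.
apply: eq_bigr => y _.
rewrite (eq_count (a2 := fun w => (if dir then y < x else x < y) && alt (~~ dir) (y :: w))) //.
by case: (if dir then y < x else x < y) => //; rewrite count_pred0.
Qed.

Lemma cnt_ent N : forall X x, uniq X -> size X = N.+1 -> x \in X ->
  count (fun w => alt true (x :: w)) (permutations (rem x X)) = ent N (count (fun y => y < x) X) /\
  count (fun w => alt false (x :: w)) (permutations (rem x X)) = ent N (N - count (fun y => y < x) X).
Proof.
elim: N => [|N IH] X x uX sX hx.
  case: X sX uX hx => [|a [|b X]] // _ _; rewrite inE => /eqP ->.
  by rewrite /= eqxx ltnn.
set Y := rem x X.
have uY : uniq Y by apply: rem_uniq.
have sY : size Y = N.+1 by rewrite size_rem // sX.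
have nY : Y != [::] by rewrite -size_eq0 sY.
have hxY : x \notin Y by rewrite mem_rem_uniqF.
have rX : count (fun y => y < x) X = count (fun y => y < x) Y.
  by move/seq.permP: (perm_to_rem hx) => ->; rewrite /= ltnn.
rewrite rX !cnt_step //; split.
- rewrite big_seq_cond.
  under eq_bigr => y /andP [hy _] do rewrite (IH Y y uY sY hy).2.
  have tot : forall a b, a != b -> (a < b) || (b < a) by move=> a b; rewrite neq_ltn.
  rewrite -big_seq_cond (@rank_sum (fun a b => a < b) ltnn ltn_trans tot Y x (fun i => ent N (N - i)) uY).
  by rewrite ent_S.
- rewrite big_seq_cond.
  under eq_bigr => y /andP [hy _] do rewrite (IH Y y uY sY hy).1.
  have e : forall y, y \in Y -> count (fun z => z < y) Y = N - count (fun z => y < z) Y.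
    move=> y hy; have := count3 y Y; rewrite count_uniq_mem // hy sY; lia.
  under eq_bigr => y /andP [hy _] do rewrite (e y hy).
  rewrite -big_seq_cond.
  have irr : irreflexive (fun a b : nat => b < a) by move=> a; rewrite ltnn.
  have tr : transitive (fun a b : nat => b < a) by move=> a b c h1 h2; apply: ltn_trans h2 h1.
  have tot : forall a b, a != b -> (b < a) || (a < b) by move=> a b; rewrite neq_ltn orbC.
  rewrite (@rank_sum (fun a b => b < a) irr tr tot Y x (fun i => ent N (N - i)) uY).
  have h3 := count3 x Y; rewrite (count_uniq_mem _ uY) (negPf hxY) sY in h3.
  have -> : count (fun y => x < y) Y = N.+1 - count (fun y => y < x) Y by lia.
  by rewrite [RHS]ent_S.
Qed.

Definition fS N (s : 'S_N) : seq nat := [seq nat_of_ord (s i) | i <- enum 'I_N].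

Lemma size_fS N (s : 'S_N) : size (fS s) = N.
Proof. by rewrite size_map size_enum_ord. Qed.

Lemma nth_fS N (s : 'S_N) i (hi : i < N) : nth 0 (fS s) i = s (Ordinal hi).
Proof.
rewrite (nth_map (Ordinal hi)) ?size_enum_ord //; congr (nat_of_ord (s _)).
by apply: val_inj; rewrite /= nth_enum_ord.
Qed.

Lemma downupE N (s : 'S_N) : downup s = alt true (fS s).
Proof.
apply/idP/idP.
- move=> /forallP h; apply/altP => i; rewrite size_fS => hi1.
  have hi : i < N by apply: ltnW.
  have := h (Ordinal hi) => /forallP /(_ (Ordinal hi1)) /implyP /(_ (eqxx _)) /=.
  by rewrite !nth_fS if_neg.
- move/altP => h; apply/forallP => i; apply/forallP => j; apply/implyP => /eqP hj.
  have hi1 : i.+1 < N by rewrite -hj.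
  have := h i; rewrite size_fS => /(_ hi1); rewrite ?addTb if_neg.
  rewrite !nth_fS.
  have -> : j = Ordinal hi1 by apply: val_inj.
  by have -> : Ordinal (ltn_ord i) = i by apply: val_inj.
Qed.

Lemma fS_inj N : injective (@fS N).
Proof.
move=> s1 s2 e; apply/permP => i; apply: val_inj.
have h1 := nth_fS s1 (ltn_ord i); have h2 := nth_fS s2 (ltn_ord i).
have eo : Ordinal (ltn_ord i) = i by apply: val_inj.
rewrite eo in h1 h2.
by rewrite /= -h1 -h2 e.
Qed.

Lemma fS_perm N (s : 'S_N) : perm_eq (fS s) (iota 0 N).
Proof.
have -> : fS s = map val (map s (enum 'I_N)) by rewrite -map_comp.
rewrite -val_enum_ord; apply: perm_map.
apply: uniq_perm.
- by rewrite map_inj_uniq ?enum_uniq //; apply: perm_inj.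
- exact: enum_uniq.
by move=> i; rewrite mem_enum; apply/mapP; exists ((s^-1)%g i); rewrite ?mem_enum ?permKV.
Qed.

Lemma fS_surj N w : perm_eq w (iota 0 N) -> exists s : 'S_N, fS s = w.
Proof.
move=> hw.
have sw : size w = N by rewrite (perm_size hw) size_iota.
have uw : uniq w by rewrite (perm_uniq hw) iota_uniq.
have lt i : i < N -> nth 0 w i < N.
  move=> hi; have : nth 0 w i \in iota 0 N by rewrite -(perm_mem hw) mem_nth ?sw.
  by rewrite mem_iota.
pose g (i : 'I_N) : 'I_N := insubd i (nth 0 w i).
have gE i : val (g i) = nth 0 w i by rewrite val_insubd lt.
have ginj : injective g.
  move=> i j /(congr1 val); rewrite !gE => /eqP; rewrite nth_uniq ?sw // => /eqP e.
  exact: val_inj.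
exists (perm ginj).
rewrite /fS; under eq_map => i do rewrite permE gE.
have -> : [seq nth 0 w (nat_of_ord i) | i <- enum 'I_N] = map (nth 0 w) (map val (enum 'I_N))
  by rewrite -map_comp.
by rewrite val_enum_ord -[RHS](mkseq_nth 0 w) /mkseq sw.
Qed.

Lemma Euler_count N : Euler_E N = count (alt true) (permutations (iota 0 N)).
Proof.
rewrite /Euler_E cardsE cardE /enum_mem size_filter -enumT.
rewrite (eq_count (a2 := fun s => alt true (fS s))); last by move=> s; rewrite !inE -downupE.
rewrite -(count_map (@fS N)).
suff hp : perm_eq (map (@fS N) (enum 'S_N)) (permutations (iota 0 N)) by move/seq.permP: hp.
apply: uniq_perm.
- by rewrite map_inj_uniq ?enum_uniq //; apply: fS_inj.
- exact: permutations_uniq.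
- move=> w; rewrite mem_permutations; apply/mapP/idP.
    by move=> [s _ ->]; apply: fS_perm.
  by move/fS_surj => [s <-]; exists s; rewrite ?mem_enum.
Qed.

Lemma count_iota_lt x n : x <= n -> count (fun y => y < x) (iota 0 n) = x.
Proof.
move=> hx; rewrite -(subnKC hx) iotaD count_cat add0n.
rewrite (@eq_in_count _ _ predT) ?count_predT ?size_iota; last first.
  by move=> y; rewrite mem_iota add0n => /andP [_ ->].
rewrite (@eq_in_count _ _ pred0 (iota x (n - x))) ?count_pred0 ?addn0 //.
by move=> y; rewrite mem_iota /= => /andP [h _]; rewrite ltnNge h.
Qed.

Lemma Euler_ent N : Euler_E N = ent N N.
Proof.
rewrite Euler_count; case: N => [|M]; first by [].
rewrite count_perm_head ?iota_uniq //.
rewrite big_seq (eq_bigr (fun x => ent M x)); last first.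
  move=> x hx; rewrite (@cnt_ent M (iota 0 M.+1) x (iota_uniq 0 M.+1) (size_iota _ _) hx).1.
  by rewrite count_iota_lt //; move: hx; rewrite mem_iota add0n => /andP [_ h]; apply: ltnW.
rewrite -big_seq.
have -> : iota 0 M.+1 = index_iota 0 M.+1 by rewrite /index_iota subn0.
rewrite big_mkord ent_S (reindex_inj rev_ord_inj) /=; apply: eq_bigr => i _.
by congr (ent _ _); have := ltn_ord i; lia.
Qed.

Theorem proposition2 (n k : nat) (hk : k <= n) :
  exists s : seq (seq (nat * nat)),
    [/\ uniq s,
        (forall p, (p \in s) = gpath (k, 0) (n, n) p)
      & size s = 'C(n, k) * Euler_E (n - k)].
Proof.
exists (paths k n n); split.
- exact: uniq_paths.
- exact: mem_paths.
- by rewrite size_paths_F // F_diag // Euler_ent.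
Qed.
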